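(* If a graph $G$ is $\mathbb{Z}_3$-colorable, then $G$ is $\mathbb{Z}_5$-colorable.
   Context: Graphs are finite, may have multiple edges but no loops. For an Abelian group $\Gamma$, $G$ is $\Gamma$-colorable if for some (equivalently, any) orientation $D$ of $G$ and every $\varphi:E(G)\to\Gamma$ there is $c:V(G)\to\Gamma$ with $c(w)-c(u)\neq\varphi(uw)$ for every directed edge $uw$ of $D$. *)

(* Defs.v *)
From mathcomp Require Import all_boot all_order all_algebra.
Set Implicit Arguments. Unset Strict Implicit. Unset Printing Implicit Defensive.
Import GRing.Theory.
Local Open Scope ring_scope.

(* A finite multigraph without loops: finite vertex type V, finite edge
   type E, and each edge e has two endpoints end1 e, end2 e (unordered
   pair; the order in which they are stored carries no meaning). *)
Definition loopless (V E : finType) (end1 end2 : E -> V) : Prop :=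
  forall e, end1 e != end2 e.

Definition tail (V E : finType) (end1 end2 : E -> V) (o : E -> bool) (e : E) : V :=
  if o e then end1 e else end2 e.
Definition head (V E : finType) (end1 end2 : E -> V) (o : E -> bool) (e : E) : V :=
  if o e then end2 e else end1 e.

Definition group_colorable (Gamma : zmodType) (V E : finType) (end1 end2 : E -> V) : Prop :=
  exists o : E -> bool, forall phi : E -> Gamma, exists c : V -> Gamma,
    forall e : E, c (head end1 end2 o e) - c (tail end1 end2 o e) != phi e.

(* Main.v *)
Require Import Defs.
From mathcomp Require Import all_boot all_order all_algebra.
Import GRing.Theory.
Local Open Scope ring_scope.

Definition g35 (f : 'Z_5) : 'Z_3 := inZp (if (f < 3)%N then val f else (val f - 2)%N).

Lemma key35 (a b : 'Z_3) (f : 'Z_5) :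
  (inZp a : 'Z_5) - inZp b = f -> a - b = g35 f.
Proof.
case: a b f => [a Ha] [b Hb] [f Hf] /(congr1 val) /= H; apply: val_inj; move: H => /=.
do 5?[case: f Hf => [|f] Hf //]; do 3?[case: a Ha => [|a] Ha //]; do 3?[case: b Hb => [|b] Hb //].
Qed.

Theorem proposition7p7 (V E : finType) (end1 end2 : E -> V) :
  loopless end1 end2 ->
  group_colorable 'Z_3 end1 end2 ->
  group_colorable 'Z_5 end1 end2.
Proof.
move=> _ [o Ho]; exists o => phi.
have [c Hc] := Ho (fun e => g35 (phi e)).
exists (fun v => inZp (c v) : 'Z_5) => e.
apply/eqP => H; move: (Hc e); by rewrite (key35 _ _ _ H) eqxx.
Qed.
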